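(* Let $(\mathfrak{h},[\;,\;],\langle\;,\;\rangle_{\mathfrak{h}})$ be an Einstein Lorentzian nilpotent Lie algebra whose center $\mathrm{Z}(\mathfrak{h})$ is nondegenerate and Euclidean (positive definite), and let $\mathfrak{g}$, $[\;,\;]_{\mathfrak{g}}$, $\langle\;,\;\rangle_{\mathfrak{g}}$, $\omega$ be as in the context. If for all $u,v,w\in\mathfrak{g}$ one has $\omega(\mathrm{ad}_u^*v,w)+\omega(v,\mathrm{ad}_u^*w)=0$, then $(\mathfrak{g},[\;,\;]_{\mathfrak{g}},\langle\;,\;\rangle_{\mathfrak{g}})$ is a Ricci-soliton.
   Context: Setting: $\mathfrak{h}$ real finite-dimensional nilpotent Lie algebra with Lorentzian inner product, center $\mathrm{Z}(\mathfrak{h})$ nondegenerate with positive definite restriction $\langle\;,\;\rangle_z$. $\mathfrak{g}=\mathrm{Z}(\mathfrak{h})^\perp$ with restricted inner product $\langle\;,\;\rangle_{\mathfrak{g}}$; for $u,v\in\mathfrak{g}$, $[u,v]=[u,v]_{\mathfrak{g}}+\omega(u,v)$ with $[u,v]_{\mathfrak{g}}\in\mathfrak{g}$, $\omega(u,v)\in\mathrm{Z}(\mathfrak{h})$, and $(\mathfrak{g},[\;,\;]_{\mathfrak{g}})$ is a Lie algebra. $\mathrm{ad}_u(v)=[u,v]_{\mathfrak{g}}$ and $\mathrm{ad}_u^*$ is its adjoint w.r.t. $\langle\;,\;\rangle_{\mathfrak{g}}$. Ricci curvature is defined via the Levi-Civita product $2\langle \mathrm{L}_uv,w\rangle=\langle[u,v],w\rangle+\langle[w,u],v\rangle+\langle[w,v],u\rangle$,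 $K(u,v)=\mathrm{L}_{[u,v]}-[\mathrm{L}_u,\mathrm{L}_v]$, $\mathrm{ric}(u,v)=\mathrm{tr}(w\mapsto K(u,w)v)$, $\langle\mathrm{Ric}\,u,v\rangle=\mathrm{ric}(u,v)$; Einstein means $\mathrm{Ric}=\lambda\,\mathrm{Id}$ for some $\lambda\in\mathbb{R}$. A pseudo-Euclidean Lie algebra is a Ricci-soliton if there exist $\lambda\in\mathbb{R}$ and a derivation $D$ of it with $\mathrm{Ric}=\lambda\,\mathrm{Id}+D$. *)

(* Defs.v *)
From HB Require Import structures.
From mathcomp Require Import all_boot all_order all_algebra.
From mathcomp Require Import reals.
From Stdlib Require Import ClassicalEpsilon.
Set Implicit Arguments. Unset Strict Implicit. Unset Printing Implicit Defensive.
Import Order.TTheory GRing.Theory Num.Theory.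
Local Open Scope ring_scope.

Section MetricLie.
Variables (R : realType) (V : vectType R).

(* classical choice of a vector satisfying P (used for vectors defined by
   a characterizing identity, unique when the form is nondegenerate) *)
Definition choose_vec (P : V -> Prop) : V := epsilon (inhabits (0 : V)) P.

Definition lie_algebra (br : V -> V -> V) : Prop :=
  [/\ (forall a x y z, br (a *: x + y) z = a *: br x z + br y z),
      (forall a x y z, br z (a *: x + y) = a *: br z x + br z y),
      (forall x, br x x = 0) &
      (forall x y z, br x (br y z) + br y (br z x) + br z (br x y) = 0)].

(* nilpotent: all brackets [x_k,[...,[x_1,x_0]]] of length k+1 vanish for some k *)
Definition nilpotent (br : V -> V -> V) : Prop :=
  exists k : nat, forall (x0 : V) (xs : seq V),
    size xs = k -> foldr (fun y acc => br y acc) x0 xs = 0.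

Definition sym_bilinear (b : V -> V -> R) : Prop :=
  (forall a x y z, b (a *: x + y) z = a * b x z + b y z) /\
  (forall x y, b x y = b y x).

Definition lorentzian (b : V -> V -> R) : Prop :=
  sym_bilinear b /\
  exists X : (\dim {:V}).-tuple V, basis_of fullv X /\
    exists i0 : 'I_(\dim {:V}), forall i j,
      b (tnth X i) (tnth X j) = if i == j then (if i == i0 then -1 else 1) else 0.

Definition central (br : V -> V -> V) (z : V) : Prop := forall x, br z x = 0.

Definition lc_prod (br : V -> V -> V) (b : V -> V -> R) (u v : V) : V :=
  choose_vec (fun x => forall w,
    2 * b x w = b (br u v) w + b (br w u) v + b (br w v) u).

Definition curv br b (u v w : V) : V :=
  lc_prod br b (br u v) w
  - (lc_prod br b u (lc_prod br b v w) - lc_prod br b v (lc_prod br b u w)).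

Definition vtrace (f : V -> V) : R :=
  \sum_(i < \dim {:V}) coord (vbasis fullv) i (f (tnth (vbasis fullv) i)).

Definition ric br b (u v : V) : R := vtrace (fun w => curv br b u w v).

Definition Ric br b (u : V) : V :=
  choose_vec (fun x => forall v, b x v = ric br b u v).

Definition einstein br b : Prop := exists lam : R, forall u, Ric br b u = lam *: u.

Definition derivation (br : V -> V -> V) (D : 'End(V)) : Prop :=
  forall u v, D (br u v) = br (D u) v + br u (D v).

Definition ricci_soliton br b : Prop :=
  exists (lam : R) (D : 'End(V)), derivation br D /\
    forall u, Ric br b u = lam *: u + D u.

Definition adj (b : V -> V -> R) (f : V -> V) (v : V) : V :=
  choose_vec (fun x => forall w, b x w = b v (f w)).

End MetricLie.

Section Decomp.
Variables (R : realType) (H : vectType R) (Z G : {vspace H}) (br : H -> H -> H).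

(* [u,v] = [u,v]_g + omega(u,v), with [u,v]_g in g = G, omega(u,v) in Z *)
Definition gbr (u v : subvs_of G) : subvs_of G :=
  vsproj G (daddv_pi G Z (br (vsval u) (vsval v))).

Definition omega (u v : H) : H := daddv_pi Z G (br u v).

Definition gform (b : H -> H -> R) (u v : subvs_of G) : R := b (vsval u) (vsval v).

End Decomp.

Arguments gbr {R H} Z G br u v.
Arguments omega {R H} Z G br u v.
Arguments gform {R H} G b u v.

(* Main.v *)
Require Import Defs.
From HB Require Import structures.
From mathcomp Require Import all_boot all_order all_algebra.
From mathcomp Require Import reals.
From mathcomp Require Import ring lra.
From Stdlib Require Import ClassicalEpsilon.
Set Implicit Arguments. Unset Strict Implicit. Unset Printing Implicit Defensive.
Import Order.TTheory GRing.Theory Num.Theory.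
Local Open Scope ring_scope.

Section LinSum.
Variables (R : realType) (V W : lmodType R).
Lemma lin0 (f : V -> W) : linear f -> f 0 = 0.
Proof.
move=> lf; have h := lf 1 0 0; rewrite scale1r addr0 scale1r in h.
by apply: (addrI (f 0)); rewrite addr0 -h.
Qed.
Lemma lin_sum (f : V -> W) (I : finType) (F : I -> V) :
  linear f -> f (\sum_i F i) = \sum_i f (F i).
Proof.
move=> lf.
have f0 := lin0 lf.
apply: (@big_rec2 V W (fun x y => f x = y)) => // i y1 y2 _ <-.
have := lf 1 (F i) y1; rewrite !scale1r; done.
Qed.
Lemma linE (f : V -> W) : linear f -> forall a x y, f (a *: x + y) = a *: f x + f y.
Proof. by move=> lf a x y; apply: lf. Qed.
Lemma linD (f : V -> W) x y : linear f -> f (x + y) = f x + f y.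
Proof. by move=> lf; have := linE lf 1 x y; rewrite !scale1r. Qed.
Lemma linZ (f : V -> W) a x : linear f -> f (a *: x) = a *: f x.
Proof. by move=> lf; move: (linE lf a x 0); rewrite (lin0 lf) !addr0. Qed.
Lemma linN (f : V -> W) x : linear f -> f (- x) = - f x.
Proof. by move=> lf; rewrite -scaleN1r (linZ _ _ lf) scaleN1r. Qed.
Lemma linB (f : V -> W) x y : linear f -> f (x - y) = f x - f y.
Proof. by move=> lf; rewrite (linD _ _ lf) (linN _ lf). Qed.
End LinSum.

Section Frame.
Variables (R : realType) (V : vectType R) (b : V -> V -> R).
Hypothesis bl : forall a x y z, b (a *: x + y) z = a * b x z + b y z.
Hypothesis bs : forall x y, b x y = b y x.

Definition slin (g : V -> R) := forall a x y, g (a *: x + y) = a * g x + g y.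

Lemma slin0 g : slin g -> g 0 = 0.
Proof.
move=> lg; have h := lg 1 0 0; rewrite scale1r addr0 mul1r in h.
by apply: (addrI (g 0)); rewrite addr0 -h.
Qed.
Lemma slinD g x y : slin g -> g (x + y) = g x + g y.
Proof. by move=> lg; have := lg 1 x y; rewrite scale1r mul1r. Qed.
Lemma slinZ g a x : slin g -> g (a *: x) = a * g x.
Proof. by move=> lg; move: (lg a x 0); rewrite (slin0 lg) !addr0. Qed.
Lemma slinN g x : slin g -> g (- x) = - g x.
Proof. by move=> lg; rewrite -scaleN1r (slinZ _ _ lg) mulN1r. Qed.
Lemma slinB g x y : slin g -> g (x - y) = g x - g y.
Proof. by move=> lg; rewrite (slinD _ _ lg) (slinN _ lg). Qed.
Lemma slin_sum g (I : finType) (F : I -> V) : slin g ->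
  g (\sum_i F i) = \sum_i g (F i).
Proof.
move=> lg; apply: (@big_rec2 V R (fun x y => g x = y)) => [|i y1 y2 _ <-].
  exact: slin0.
exact: slinD.
Qed.
Lemma slin_sumZ g (I : finType) (c : I -> R) (F : I -> V) : slin g ->
  g (\sum_i c i *: F i) = \sum_i c i * g (F i).
Proof.
by move=> lg; rewrite (slin_sum _ lg); apply: eq_bigr => i _; rewrite (slinZ _ _ lg).
Qed.

Lemma bL z : slin (b ^~ z). Proof. by move=> a x y; apply: bl. Qed.
Lemma bR z : slin (b z). Proof. by move=> a x y; rewrite /= !(bs z) bl. Qed.

Lemma bDl x y z : b (x + y) z = b x z + b y z. Proof. exact: slinD (bL z). Qed.
Lemma bZl a x z : b (a *: x) z = a * b x z. Proof. exact: slinZ (bL z). Qed.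
Lemma bNl x z : b (- x) z = - b x z. Proof. exact: slinN (bL z). Qed.
Lemma b0l z : b 0 z = 0. Proof. exact: slin0 (bL z). Qed.
Lemma bsuml (J : finType) (F : J -> V) z : b (\sum_j F j) z = \sum_j b (F j) z.
Proof. exact: slin_sum (bL z). Qed.

Definition frame (U : {vspace V}) (I : finType) (X Y : I -> V) :=
  [/\ forall i, X i \in U, forall i, Y i \in U &
      forall y, y \in U -> y = \sum_i b y (Y i) *: X i].

Section FrameU.
Variables (U : {vspace V}) (I : finType) (X Y : I -> V).
Hypothesis fr : frame U X Y.

Lemma frame_eq x y : x \in U -> y \in U ->
  (forall w, w \in U -> b x w = b y w) -> x = y.
Proof.
case: fr => _ hY hE xU yU h; rewrite (hE x xU) (hE y yU).
by apply: eq_bigr => i _; rewrite h.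
Qed.

Lemma frame_dual y : y \in U -> y = \sum_i b y (X i) *: Y i.
Proof.
case: fr => hX hY hE yU; apply: frame_eq => //.
  by apply: memv_suml => i _; apply: memvZ.
move=> w wU; rewrite (slin_sumZ _ _ (bL w)).
rewrite {1}(hE w wU) (slin_sumZ _ _ (bR y)).
by apply: eq_bigr => i _; rewrite mulrC (bs w).
Qed.

Lemma frame_sym (B : V -> V -> R) :
  (forall z, slin (B ^~ z)) -> (forall z, slin (B z)) ->
  \sum_i B (X i) (Y i) = \sum_i B (Y i) (X i).
Proof.
case: fr => hX hY hE BL BR.
transitivity (\sum_i \sum_j b (Y i) (Y j) * B (X i) (X j)).
  apply: eq_bigr => i _; rewrite {1}(hE (Y i) (hY i)).
  by rewrite (slin_sumZ _ _ (BR _)).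
transitivity (\sum_i \sum_j b (Y i) (Y j) * B (X j) (X i)).
  rewrite exchange_big /=; apply: eq_bigr => i _; apply: eq_bigr => j _.
  by rewrite bs.
apply: eq_bigr => i _; rewrite {2}(hE (Y i) (hY i)).
by rewrite (slin_sumZ _ _ (BL _)).
Qed.

Lemma riesz (g : V -> R) : slin g ->
  exists2 x, x \in U & forall w, w \in U -> b x w = g w.
Proof.
case: fr => hX hY hE lg; exists (\sum_i g (X i) *: Y i).
  by apply: memv_suml => i _; apply: memvZ.
move=> w wU; rewrite (slin_sumZ _ _ (bL w)) {2}(hE w wU) (slin_sumZ _ _ lg).
by apply: eq_bigr => i _; rewrite mulrC (bs w).
Qed.

End FrameU.

Lemma vtrace_frame (I : finType) (X Y : I -> V) (f : V -> V) :
  frame fullv X Y -> linear f -> vtrace f = \sum_i b (f (X i)) (Y i).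
Proof.
move=> fr lf; case: (fr) => hX hY hE.
rewrite /vtrace.
transitivity (\sum_(k < \dim {:V}) \sum_i
   b (tnth (vbasis fullv) k) (Y i) * coord (vbasis fullv) k (f (X i))).
  apply: eq_bigr => k _; rewrite {1}(hE (tnth (vbasis fullv) k) (memvf _)).
  rewrite (lin_sum _ lf) linear_sum; apply: eq_bigr => i _.
  by rewrite (linZ _ _ lf) linearZ.
rewrite exchange_big /=; apply: eq_bigr => i _.
rewrite {2}(coord_vbasis (memvf (f (X i)))) (slin_sumZ _ _ (bL _)).
by apply: eq_bigr => k _; rewrite mulrC (tnth_nth 0).
Qed.

End Frame.

Section LC.
Variables (R : realType) (V : vectType R) (br : V -> V -> V) (b : V -> V -> R).
Hypothesis bl : forall a x y z, b (a *: x + y) z = a * b x z + b y z.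
Hypothesis bs : forall x y, b x y = b y x.
Hypothesis brl : forall a x y z, br (a *: x + y) z = a *: br x z + br y z.
Hypothesis brr : forall a x y z, br z (a *: x + y) = a *: br z x + br z y.
Variables (I : finType) (X Y : I -> V).
Hypothesis fr : frame b fullv X Y.

Lemma choose_vecP (P : V -> Prop) : (exists x, P x) -> P (choose_vec P).
Proof. exact: epsilon_spec. Qed.

Lemma bRE a x y z : b z (a *: x + y) = a * b z x + b z y.
Proof. exact: (bR bl bs). Qed.

Local Notation L := (lc_prod br b).

Lemma veq x y : (forall w, b x w = b y w) -> x = y.
Proof. by move=> h; apply: (frame_eq fr); rewrite ?memvf // => w _; apply: h. Qed.

Lemma lc_spec u v w :
  b (L u v) w = 2^-1 * (b (br u v) w + b (br w u) v + b (br w v) u).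
Proof.
pose g w := 2^-1 * (b (br u v) w + b (br w u) v + b (br w v) u).
have lg : slin g.
  by move=> a x y; rewrite /g bRE !brl !bl; ring.
have [x _ hx] := riesz bl bs fr lg.
have P2 : forall w, 2 * b (L u v) w =
   b (br u v) w + b (br w u) v + b (br w v) u.
  apply: (choose_vecP (P := fun x => forall w,  2 * b x w =
     b (br u v) w + b (br w u) v + b (br w v) u)).
  exists x => w'; rewrite hx ?memvf // /g mulrA divff ?mul1r //.
  by rewrite pnatr_eq0.
rewrite -P2 mulrA mulVf ?mul1r //; by rewrite pnatr_eq0.
Qed.

Lemma lcL a u u' v : L (a *: u + u') v = a *: L u v + L u' v.
Proof. by apply: veq => w; rewrite bl !lc_spec ?brl ?brr ?bl ?bRE ?bl; ring. Qed.

Lemma lcR a v v' u : L u (a *: v + v') = a *: L u v + L u v'.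
Proof. by apply: veq => w; rewrite bl !lc_spec ?brl ?brr ?bl ?bRE ?bl; ring. Qed.

Lemma lcL_lin v : linear (L ^~ v). Proof. by move=> a x y; apply: lcL. Qed.
Lemma lcR_lin u : linear (L u). Proof. by move=> a x y; apply: lcR. Qed.

Lemma curv_lin3 u v : linear (curv br b u v).
Proof.
move=> a x y; rewrite /curv !lcR.
by apply: veq => w; rewrite !(bDl bl, bNl bl, bZl bl); ring.
Qed.

Lemma curv_lin2 u w : linear (fun v => curv br b u v w).
Proof.
move=> a x y; rewrite /curv !brr !lcL !lcR.
by apply: veq => z; rewrite !(bDl bl, bNl bl, bZl bl); ring.
Qed.

Lemma ric_frame u v :
  ric br b u v = \sum_i b (curv br b u (X i) v) (Y i).
Proof. rewrite /ric; exact: (vtrace_frame bl fr (curv_lin2 u v)). Qed.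

Lemma ric_slin u : slin (ric br b u).
Proof.
move=> a x y; rewrite !ric_frame mulr_sumr -big_split /=.
by apply: eq_bigr => i _; rewrite (linE (curv_lin3 _ _)) bl.
Qed.

Lemma Ric_spec u v : b (Ric br b u) v = ric br b u v.
Proof.
have [x _ hx] := riesz bl bs fr (ric_slin u).
move: v; apply: (choose_vecP (P := fun x => forall v, b x v = ric br b u v)).
by exists x => v; rewrite hx ?memvf.
Qed.

Lemma adj_spec (f : V -> V) v w : linear f -> b (adj b f v) w = b v (f w).
Proof.
move=> lf.
have lg : slin (fun w => b v (f w)).
  by move=> a x y; rewrite /= (linE lf) bRE.
have [x _ hx] := riesz bl bs fr lg.
move: w; apply: (choose_vecP (P := fun x => forall w, b x w = b v (f w))).
by exists x => w; rewrite hx ?memvf.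
Qed.

End LC.

Section Spec.
Variables (R : realType) (H : vectType R) (br : H -> H -> H) (b : H -> H -> R)
  (Z G : {vspace H}).
Hypothesis bl : forall a x y z, b (a *: x + y) z = a * b x z + b y z.
Hypothesis bs : forall x y, b x y = b y x.
Hypothesis brl : forall a x y z, br (a *: x + y) z = a *: br x z + br y z.
Hypothesis brr : forall a x y z, br z (a *: x + y) = a *: br z x + br z y.
Hypothesis bralt : forall x, br x x = 0.
Hypothesis jac : forall x y z, br x (br y z) + br y (br z x) + br z (br x y) = 0.
Hypothesis cen : forall z x, z \in Z -> br z x = 0.
Hypothesis hpos : forall z, z \in Z -> z != 0 -> 0 < b z z.
Hypothesis hG : forall x, x \in G <-> (forall z, z \in Z -> b x z = 0).
Variables (I : finType) (X Y : I -> H).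
Hypothesis fr : frame b fullv X Y.

Definition phiZ (y : H) : 'rV[R]_(\dim Z) := \row_i b y (vbasis Z)`_i.
Lemma phiZ_lin : linear phiZ.
Proof. by move=> a x y; apply/rowP => i; rewrite !mxE bl. Qed.
HB.instance Definition _ := GRing.isLinear.Build R H 'rV[R]_(\dim Z) *:%R phiZ phiZ_lin.

Lemma bDr x y z : b z (x + y) = b z x + b z y. Proof. exact: slinD (bR bl bs z). Qed.
Lemma bZr a x z : b z (a *: x) = a * b z x. Proof. exact: slinZ (bR bl bs z). Qed.
Lemma bNr x z : b z (- x) = - b z x. Proof. exact: slinN (bR bl bs z). Qed.
Lemma b0r z : b z 0 = 0. Proof. exact: slin0 (bR bl bs z). Qed.
Lemma bsumr (J : finType) (F : J -> H) z : b z (\sum_j F j) = \sum_j b z (F j).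
Proof. exact: slin_sum (bR bl bs z). Qed.

Lemma GZ0 : (G :&: Z = 0)%VS.
Proof.
apply/eqP; rewrite -subv0; apply/subvP => x /memv_capP [xG xZ].
rewrite memv0; apply/negPn/negP => x0.
by have := hpos xZ x0; rewrite (proj1 (hG x) xG x xZ) ltxx.
Qed.
Lemma ZG0 : (Z :&: G = 0)%VS. Proof. by rewrite capvC GZ0. Qed.

Lemma GZfull y : y \in (G + Z)%VS.
Proof.
have sub : (lker (linfun phiZ) <= G)%VS.
  apply/subvP => x; rewrite memv_ker lfunE => /eqP h0.
  apply/hG => z zZ; rewrite (coord_vbasis zZ) bsumr big1 // => i _.
  rewrite bZr; have := congr1 (fun m : 'rV_(\dim Z) => m 0 i) h0.
  by rewrite !mxE => ->; rewrite mulr0.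
have := limg_ker_dim (linfun phiZ) fullv; rewrite capfv => hd.
have himg : (\dim (linfun phiZ @: fullv) <= \dim Z)%N.
  by have := dimvS (subvf (linfun phiZ @: fullv)); rewrite dimvf /dim /= mul1n.
have hGd := dimvS sub.
have : (G + Z == fullv)%VS.
  rewrite eqEdim subvf /= dimv_disjoint_sum ?GZ0 //.
  by rewrite -hd; apply: leq_add.
by move/eqP => ->; apply: memvf.
Qed.


Local Notation pG := (daddv_pi G Z).
Local Notation pZ := (daddv_pi Z G).

Lemma pG_G y : pG y \in G. Proof. exact: memv_pi. Qed.
Lemma pZ_Z y : pZ y \in Z. Proof. exact: memv_pi. Qed.
Lemma pGZ y : pG y + pZ y = y. Proof. exact: daddv_pi_add GZ0 (GZfull y). Qed.
Lemma pG_id g : g \in G -> pG g = g. Proof. exact: daddv_pi_id GZ0. Qed.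
Lemma pZ_id z : z \in Z -> pZ z = z. Proof. exact: daddv_pi_id ZG0. Qed.
Lemma pZ_G g : g \in G -> pZ g = 0.
Proof. by move=> gG; have h := pGZ g; rewrite pG_id // in h; apply: (addrI g); rewrite addr0. Qed.
Lemma pG_Z z : z \in Z -> pG z = 0.
Proof. by move=> zZ; have h := pGZ z; rewrite pZ_id // in h; apply: (addIr z); rewrite add0r. Qed.
Lemma bGZ g z : g \in G -> z \in Z -> b g z = 0. Proof. by move=> /hG; apply. Qed.
Lemma bZG z g : z \in Z -> g \in G -> b z g = 0. Proof. by move=> zZ gG; rewrite bs bGZ. Qed.
Lemma bpG y w : w \in G -> b (pG y) w = b y w.
Proof. by move=> wG; rewrite -{2}(pGZ y) (bDl bl) (bZG (pZ_Z y) wG) addr0. Qed.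
Lemma bpZ y w : w \in Z -> b (pZ y) w = b y w.
Proof. by move=> wZ; rewrite -{2}(pGZ y) (bDl bl) (bGZ (pG_G y) wZ) add0r. Qed.

Lemma veqH x y : (forall w, w \in G -> b x w = b y w) ->
  (forall w, w \in Z -> b x w = b y w) -> x = y.
Proof.
move=> h1 h2; apply: (frame_eq fr); rewrite ?memvf // => w _.
by rewrite -(pGZ w) !bDr h1 ?pG_G // h2 ?pZ_Z.
Qed.

Lemma veqG x y : x \in G -> y \in G -> (forall w, w \in G -> b x w = b y w) -> x = y.
Proof.
move=> xG yG h; apply: veqH => // w wZ; by rewrite !bGZ.
Qed.

Lemma veqZ x y : x \in Z -> y \in Z -> (forall w, w \in Z -> b x w = b y w) -> x = y.
Proof.
move=> xZ yZ h; apply: veqH => // w wG; by rewrite !bZG.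
Qed.

Definition gX i := pG (X i).
Definition gY i := pG (Y i).
Definition zX i := pZ (X i).
Definition zY i := pZ (Y i).

Lemma frG : frame b G gX gY.
Proof.
case: fr => _ _ hE; split; [move=> i; exact: pG_G | move=> i; exact: pG_G|].
move=> y yG; rewrite -{1}(pG_id yG) {1}(hE y (memvf y)) linear_sum.
apply: eq_bigr => i _; rewrite linearZ /= /gY /gX (bs y (pG _)) bpG // bs //.
Qed.

Lemma frZ : frame b Z zX zY.
Proof.
case: fr => _ _ hE; split; [move=> i; exact: pZ_Z | move=> i; exact: pZ_Z|].
move=> y yZ; rewrite -{1}(pZ_id yZ) {1}(hE y (memvf y)) linear_sum.
apply: eq_bigr => i _; rewrite linearZ /= /zY /zX (bs y (pZ _)) bpZ // bs //.
Qed.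

Definition hX (s : I + I) := match s with inl i => gX i | inr i => zX i end.
Definition hY (s : I + I) := match s with inl i => gY i | inr i => zY i end.

Lemma frH : frame b fullv hX hY.
Proof.
split; [by move=> *; apply: memvf | by move=> *; apply: memvf |].
move=> y _; rewrite big_sumType /=.
case: frG => _ _ hg; case: frZ => _ _ hz.
have -> : \sum_i b y (gY i) *: gX i = \sum_i b (pG y) (gY i) *: gX i.
  by apply: eq_bigr => i _; rewrite -{1}(pGZ y) (bDl bl) (bZG (pZ_Z y) (pG_G _)) addr0.
have -> : \sum_i b y (zY i) *: zX i = \sum_i b (pZ y) (zY i) *: zX i.
  by apply: eq_bigr => i _; rewrite -{1}(pGZ y) (bDl bl) (bGZ (pG_G y) (pZ_Z _)) add0r.
by rewrite -(hg _ (pG_G y)) -(hz _ (pZ_Z y)) pGZ.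
Qed.


Local Notation Gs := (subvs_of G).
Local Notation gb := (gform G b).
Local Notation gbr' := (gbr Z G br).

Lemma gbl : forall a (x y z : Gs), gb (a *: x + y) z = a * gb x z + gb y z.
Proof. by move=> a x y z; rewrite /gform linearP /= bl. Qed.
Lemma gbs : forall x y : Gs, gb x y = gb y x.
Proof. by move=> x y; rewrite /gform bs. Qed.
Lemma gbrl : forall a (x y z : Gs), gbr' (a *: x + y) z = a *: gbr' x z + gbr' y z.
Proof. by move=> a x y z; rewrite /gbr linearP /= brl !linearP. Qed.
Lemma gbrr : forall a (x y z : Gs), gbr' z (a *: x + y) = a *: gbr' z x + gbr' z y.
Proof. by move=> a x y z; rewrite /gbr linearP /= brr !linearP. Qed.
Lemma vsval_gbr (u v : Gs) : vsval (gbr' u v) = pG (br (vsval u) (vsval v)).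
Proof. by rewrite /gbr vsprojK // pG_G. Qed.

Definition sX i : Gs := vsproj G (gX i).
Definition sY i : Gs := vsproj G (gY i).

Lemma frGs : frame gb fullv sX sY.
Proof.
split; [by move=> *; apply: memvf | by move=> *; apply: memvf |].
move=> y _; apply: subvs_inj; rewrite linear_sum /=.
case: frG => hx hy he; rewrite {1}(he _ (subvsP y)).
by apply: eq_bigr => i _; rewrite /gform /sX /sY !vsprojK.
Qed.

Definition Lg a c := vsval (lc_prod gbr' gb (vsproj G a) (vsproj G c)).

Lemma Lg_G a c : Lg a c \in G. Proof. exact: subvsP. Qed.

Lemma Lg_spec a c w : a \in G -> c \in G -> w \in G ->
  b (Lg a c) w = 2^-1 * (b (br a c) w + b (br w a) c + b (br w c) a).
Proof.
move=> aG cG wG.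
have := lc_spec gbl gbs gbrl frGs (vsproj G a) (vsproj G c) (vsproj G w).
rewrite /gform !vsval_gbr !vsprojK // => ->.
by rewrite !bpG // (bs (pG _) c) (bs (pG _) a) !bpG // (bs c) (bs a).
Qed.

Lemma brDl x y z : br (x + y) z = br x z + br y z.
Proof. by have := brl 1 x y z; rewrite !scale1r. Qed.
Lemma brDr x y z : br z (x + y) = br z x + br z y.
Proof. by have := brr 1 x y z; rewrite !scale1r. Qed.
Lemma brl_lin z : linear (br ^~ z). Proof. by move=> a x y; apply: brl. Qed.
Lemma brr_lin z : linear (br z). Proof. by move=> a x y; apply: brr. Qed.
Lemma brZl a x z : br (a *: x) z = a *: br x z. Proof. exact: linZ (brl_lin z). Qed.
Lemma brZr a x z : br z (a *: x) = a *: br z x. Proof. exact: linZ (brr_lin z). Qed.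
Lemma brNl x z : br (- x) z = - br x z. Proof. exact: linN (brl_lin z). Qed.
Lemma brNr x z : br z (- x) = - br z x. Proof. exact: linN (brr_lin z). Qed.
Lemma br0l z : br 0 z = 0. Proof. exact: lin0 (brl_lin z). Qed.
Lemma br0r z : br z 0 = 0. Proof. exact: lin0 (brr_lin z). Qed.
Lemma brN x y : br x y = - br y x.
Proof.
have := bralt (x + y); rewrite brDl !brDr !bralt add0r addr0 => /eqP.
by rewrite addr_eq0 => /eqP.
Qed.
Lemma cenr x z : z \in Z -> br x z = 0.
Proof. by move=> zZ; rewrite brN cen // oppr0. Qed.

Definition J z a := \sum_i b (br a (gY i)) z *: gX i.

Lemma J_G z a : J z a \in G.
Proof. by apply: memv_suml => i _; apply: memvZ; apply: pG_G. Qed.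

Lemma J_spec z a w : w \in G -> b (J z a) w = b (br a w) z.
Proof.
move=> wG; case: (frG) => hx hy _.
rewrite {2}(frame_dual bl bs frG wG) (lin_sum _ (brr_lin a)) (bsuml bl).
rewrite /J (bsuml bl); apply: eq_bigr => i _.
by rewrite (bZl bl) brZr (bZl bl) mulrC bs.
Qed.

Lemma J_Z z a w : w \in Z -> b (J z a) w = 0.
Proof. by move=> wZ; rewrite bGZ // J_G. Qed.

Lemma J_lin z : linear (J z).
Proof.
move=> a x y; apply: veqG; rewrite ?J_G //.
  by rewrite memvD ?memvZ ?J_G.
by move=> w wG; rewrite (bDl bl) (bZl bl) !J_spec // brl bl.
Qed.

Lemma J_linz a : linear (J ^~ a).
Proof.
move=> c x y; apply: veqG; rewrite ?J_G //.
  by rewrite memvD ?memvZ ?J_G.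
by move=> w wG; rewrite (bDl bl) (bZl bl) !J_spec // bRE.
Qed.


Local Notation L := (lc_prod br b).
Lemma hbD x y z : b (x + y) z = b x z + b y z. Proof. have := bDl bl x y z. exact. Qed.
Lemma hbZ a x z : b (a *: x) z = a * b x z. Proof. exact: (bZl bl a x z). Qed.
Lemma hbN x z : b (- x) z = - b x z. Proof. exact: (bNl bl x z). Qed.
Lemma hb0 z : b 0 z = 0. Proof. exact: (b0l bl z). Qed.
Lemma Lspec u v w :
  b (L u v) w = 2^-1 * (b (br u v) w + b (br w u) v + b (br w v) u).
Proof. exact: (lc_spec bl bs brl fr u v w). Qed.
Lemma L_lin1 v : linear (L ^~ v). Proof. exact: (lcL_lin bl bs brl brr fr v). Qed.
Lemma L_lin2 u : linear (L u). Proof. exact: (lcR_lin bl bs brl brr fr u). Qed.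

Ltac bsimp := rewrite ?(hbD, hbZ, hbN, hb0, bDr, bZr, bNr, b0r).

Lemma L1 a c : a \in G -> c \in G -> L a c = Lg a c + 2^-1 *: pZ (br a c).
Proof.
move=> aG cG; apply: veqH => w wG; rewrite Lspec; bsimp.
  by rewrite Lg_spec // (bZG (pZ_Z _) wG) mulr0 addr0.
rewrite (bGZ (Lg_G _ _) wG) bpZ // !(cen _ wG) !hb0; ring.
Qed.

Lemma L2 a z : a \in G -> z \in Z -> L a z = - 2^-1 *: J z a.
Proof.
move=> aG zZ; apply: veqH => w wG; rewrite Lspec; bsimp.
  rewrite J_spec // (cenr a zZ) (cenr w zZ) !hb0 (brN w a) hbN; ring.
by rewrite J_Z // (cenr a zZ) !(cen _ wG) !hb0; ring.
Qed.

Lemma L3 a z : a \in G -> z \in Z -> L z a = - 2^-1 *: J z a.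
Proof.
move=> aG zZ; apply: veqH => w wG; rewrite Lspec; bsimp.
  rewrite J_spec // (cen _ zZ) (cenr w zZ) !hb0 (brN w a) hbN; ring.
by rewrite J_Z // (cen _ zZ) !(cen _ wG) !hb0; ring.
Qed.

Lemma L4 z z' : z \in Z -> z' \in Z -> L z z' = 0.
Proof.
move=> zZ z'Z; apply: veqH => w wG; rewrite Lspec; bsimp.
  by rewrite (cen _ zZ) (cenr w zZ) (cenr w z'Z) !hb0; ring.
by rewrite (cen _ zZ) !(cen _ wG) !hb0; ring.
Qed.


Lemma curvG u g v : u \in G -> g \in G -> v \in G ->
  vsval (curv gbr' gb (vsproj G u) (vsproj G g) (vsproj G v)) =
  Lg (pG (br u g)) v - (Lg u (Lg g v) - Lg g (Lg u v)).
Proof.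
move=> uG gG vG; rewrite /curv !raddfB /=.
have -> : gbr' (vsproj G u) (vsproj G g) = vsproj G (pG (br u g)).
  by rewrite /gbr !vsprojK.
rewrite -[lc_prod gbr' gb (vsproj G g) (vsproj G v)]vsvalK.
rewrite -[lc_prod gbr' gb (vsproj G u) (vsproj G v)]vsvalK.
by [].
Qed.

Lemma KG u g v g' : u \in G -> g \in G -> v \in G -> g' \in G ->
  b (curv br b u g v) g' =
  b (vsval (curv gbr' gb (vsproj G u) (vsproj G g) (vsproj G v))) g'
  + (- 2^-1) * b (br v g') (pZ (br u g))
  + 4^-1 * b (br u g') (pZ (br g v))
  + (- 4^-1) * b (br g g') (pZ (br u v)).
Proof.
move=> uG gG vG g'G; rewrite curvG // /curv.
rewrite -{1}(pGZ (br u g)) (linD _ _ (L_lin1 v)) L1 ?pG_G // L3 ?pZ_Z //.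
rewrite (L1 gG vG) (L1 uG vG) (linD _ _ (L_lin2 u)) (linZ _ _ (L_lin2 u)).
rewrite (linD _ _ (L_lin2 g)) (linZ _ _ (L_lin2 g)).
rewrite (L1 uG (Lg_G _ _)) (L2 uG (pZ_Z _)) (L1 gG (Lg_G _ _)) (L2 gG (pZ_Z _)).
bsimp; rewrite !J_spec // !(bZG (pZ_Z _) g'G).
have h4 : (4 : R)^-1 = 2^-1 * 2^-1.
  by rewrite -invfM -natrM.
rewrite h4; ring.
Qed.

Lemma KZ u v z z' : u \in G -> v \in G -> z \in Z -> z' \in Z ->
  b (curv br b u z v) z' = 4^-1 * b (br u (J z v)) z'.
Proof.
move=> uG vG zZ z'Z; rewrite /curv (cenr u zZ) (lin0 (L_lin1 v)).
rewrite (L3 vG zZ) (linZ _ _ (L_lin2 u)) (L1 uG (J_G _ _)).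
rewrite (L1 uG vG) (linD _ _ (L_lin2 z)) (linZ _ _ (L_lin2 z)).
rewrite (L3 (Lg_G _ _) zZ) (L4 zZ (pZ_Z _)).
bsimp; rewrite !(bGZ (Lg_G _ _) z'Z) !J_Z // bpZ // ?hb0.
have h4 : (4 : R)^-1 = 2^-1 * 2^-1.
  by rewrite -invfM -natrM.
rewrite h4; ring.
Qed.


Definition P u v := \sum_i b (pZ (br u (gX i))) (pZ (br v (gY i))).

Lemma Bsym u v :
  \sum_i b (pZ (br u (gY i))) (pZ (br v (gX i))) = P u v.
Proof.
symmetry; apply: (frame_sym bs frG (B := fun x y => b (pZ (br u x)) (pZ (br v y)))).
  by move=> z a x y; rewrite /= brr linearP bl.
by move=> z a x y; rewrite /= brr linearP bRE.
Qed.

Lemma T1 u v : \sum_i b (br v (gY i)) (pZ (br u (gX i))) = P u v.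
Proof. by apply: eq_bigr => i _; rewrite -bpZ ?pZ_Z // bs. Qed.

Lemma T2 u v : \sum_i b (br u (gY i)) (pZ (br (gX i) v)) = - P u v.
Proof.
rewrite -Bsym -sumrN; apply: eq_bigr => i _.
by rewrite -bpZ ?pZ_Z // (brN _ v) linearN bNr.
Qed.

Lemma T3 w : \sum_i b (br (gX i) (gY i)) w = 0.
Proof.
have h := frame_sym bs frG (B := fun x y => b (br x y) w).
have : \sum_i b (br (gX i) (gY i)) w = - \sum_i b (br (gX i) (gY i)) w.
  rewrite {1}h; first by rewrite -sumrN; apply: eq_bigr => i _; rewrite brN hbN.
  - by move=> z a x y; rewrite /= brl bl.
  - by move=> z a x y; rewrite /= brr bl.
move/eqP; rewrite -addr_eq0 -mulr2n -mulr_natr mulf_eq0 pnatr_eq0 orbF.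
by move/eqP.
Qed.

Lemma T4 u v : \sum_i b (br u (J (zX i) v)) (zY i) = P u v.
Proof.
transitivity (\sum_i \sum_j b (br v (gY j)) (zX i) * b (br u (gX j)) (zY i)).
  apply: eq_bigr => i _; rewrite /J (lin_sum _ (brr_lin u)) (bsuml bl).
  by apply: eq_bigr => j _; rewrite brZr hbZ.
rewrite exchange_big /=; apply: eq_bigr => j _.
rewrite (frame_dual bl bs frZ (pZ_Z (br v (gY j)))) bsumr.
case: frZ => hx hy _.
by apply: eq_bigr => i _; rewrite bZr !bpZ.
Qed.

Lemma ric_rel u v : u \in G -> v \in G ->
  ric br b u v = ric gbr' gb (vsproj G u) (vsproj G v) - 2^-1 * P u v.
Proof.
move=> uG vG.
rewrite (ric_frame bl bs brl brr frH) big_sumType /=.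
rewrite (ric_frame gbl gbs gbrl gbrr frGs).
case: frG => gXG gYG _; case: frZ => zXZ zYZ _.
have -> : \sum_i b (curv br b u (gX i) v) (gY i) =
  \sum_i (b (vsval (curv gbr' gb (vsproj G u) (sX i) (vsproj G v))) (gY i)
  + (- 2^-1) * b (br v (gY i)) (pZ (br u (gX i)))
  + 4^-1 * b (br u (gY i)) (pZ (br (gX i) v))
  + (- 4^-1) * b (br (gX i) (gY i)) (pZ (br u v))).
  by apply: eq_bigr => i _; rewrite KG.
have -> : \sum_i b (curv br b u (zX i) v) (zY i) =
  \sum_i 4^-1 * b (br u (J (zX i) v)) (zY i).
  by apply: eq_bigr => i _; rewrite KZ.
rewrite !big_split /= -!mulr_sumr T1 T2 T3 T4.
have -> : \sum_i b (vsval (curv gbr' gb (vsproj G u) (sX i) (vsproj G v))) (gY i)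
   = \sum_i gb (curv gbr' gb (vsproj G u) (sX i) (vsproj G v)) (sY i).
  by apply: eq_bigr => i _; rewrite /gform /sY vsprojK.
have h4 : (4 : R)^-1 = 2^-1 * 2^-1.
  by rewrite -invfM -natrM.
rewrite h4; ring.
Qed.


Definition Sop u := \sum_i J (zX i) (J (zY i) u).

Lemma Sop_G u : Sop u \in G.
Proof. by apply: memv_suml => i _; apply: J_G. Qed.

Lemma Sop_lin : linear Sop.
Proof.
move=> a x y; rewrite /Sop scaler_sumr -big_split /=; apply: eq_bigr => i _.
by rewrite (linE (J_lin _)) (linE (J_lin _)).
Qed.

Lemma Sop_spec u w : u \in G -> w \in G -> b (Sop u) w = - P u w.
Proof.
move=> uG wG; case: frZ => zXZ zYZ _.
rewrite /Sop (bsuml bl).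
have -> : \sum_i b (J (zX i) (J (zY i) u)) w =
  - \sum_i b (br w (J (zY i) u)) (zX i).
  rewrite -sumrN; apply: eq_bigr => i _.
  by rewrite J_spec // brN hbN.
rewrite (frame_sym bs frZ (B := fun x y => b (br w (J y u)) x)).
- by rewrite T4 -Bsym; congr (- _); apply: eq_bigr => i _; rewrite bs.
- by move=> z a x y; rewrite /= bRE.
- by move=> z a x y; rewrite /= (linE (J_linz u)) brr bl.
Qed.

Variable h8 : forall u v w : Gs,
     omega Z G br (vsval (adj gb (gbr' u) v)) (vsval w)
     + omega Z G br (vsval v) (vsval (adj gb (gbr' u) w)) = 0.

Definition Aop (us : Gs) y := vsval (adj gb (gbr' us) (vsproj G y)).

Lemma gbr'_lin us : linear (gbr' us).
Proof. by move=> a x y; apply: gbrr. Qed.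

Lemma A_G us y : Aop us y \in G. Proof. exact: subvsP. Qed.

Lemma A_spec us y w : y \in G -> w \in G ->
  b (Aop us y) w = b y (pG (br (vsval us) w)).
Proof.
move=> yG wG.
have := adj_spec gbl gbs frGs (vsproj G y) (vsproj G w) (gbr'_lin us).
by rewrite /gform vsval_gbr !vsprojK.
Qed.

Lemma brpGl x w : br (pG x) w = br x w.
Proof. by rewrite -{2}(pGZ x) brDl (cen _ (pZ_Z x)) addr0. Qed.
Lemma brpGr x w : br w (pG x) = br w x.
Proof. by rewrite -{2}(pGZ x) brDr (cenr w (pZ_Z x)) addr0. Qed.

Lemma jac' u v w : br (br u v) w + br v (br u w) = br u (br v w).
Proof.
apply: (veq fr) => t.
have := congr1 (b ^~ t) (jac u v w).
rewrite /= (brN w u) (brN w (br u v)) brNr; bsimp; rewrite ?hb0.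
move=> h; lra.
Qed.

Lemma cocy u v z : u \in G -> v \in G -> z \in Z ->
  J z (pG (br u v)) + Aop (vsproj G u) (J z v) = Aop (vsproj G v) (J z u).
Proof.
move=> uG vG zZ; apply: veqG; rewrite ?memvD ?A_G ?J_G // => w wG.
rewrite hbD !A_spec ?J_G // !vsprojK // J_spec // (J_spec z v (pG_G _)) (J_spec z u (pG_G _)).
by rewrite brpGl !brpGr -hbD jac'.
Qed.

Lemma Bprop u y z : u \in G -> y \in G -> z \in Z ->
  J z (Aop (vsproj G u) y) = - pG (br u (J z y)).
Proof.
move=> uG yG zZ; apply: veqG; rewrite ?memvN ?pG_G ?J_G // => w wG.
rewrite J_spec // -bpZ //.
have := h8 (vsproj G u) (vsproj G y) (vsproj G w).
rewrite /omega !vsprojK // => /eqP; rewrite addr_eq0 => /eqP.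
rewrite /Aop => ->; rewrite hbN bpZ // -(J_spec z y (A_G _ _)) bs.
by rewrite A_spec ?J_G // vsprojK // bs hbN.
Qed.

Lemma Sop_der u v : u \in G -> v \in G ->
  Sop (pG (br u v)) = pG (br (Sop u) v) + pG (br u (Sop v)).
Proof.
move=> uG vG; case: frZ => zXZ zYZ _.
have e1 : pG (br u (Sop v)) =
    - \sum_i J (zX i) (Aop (vsproj G u) (J (zY i) v)).
  rewrite /Sop (lin_sum _ (brr_lin u)) linear_sum -sumrN; apply: eq_bigr => i _.
  by rewrite Bprop ?J_G // opprK.
have e2 : pG (br (Sop u) v) =
    \sum_i J (zX i) (Aop (vsproj G v) (J (zY i) u)).
  rewrite brN linearN /Sop (lin_sum _ (brr_lin v)) linear_sum -sumrN.
  by apply: eq_bigr => i _; rewrite Bprop ?J_G // opprK.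
have e3 : Sop (pG (br u v)) =
    \sum_i J (zX i) (Aop (vsproj G v) (J (zY i) u))
  - \sum_i J (zX i) (Aop (vsproj G u) (J (zY i) v)).
  rewrite /Sop -sumrB; apply: eq_bigr => i _.
  rewrite -(linB _ _ (J_lin _)) -cocy //.
  by rewrite addrK.
by rewrite e1 e2 e3.
Qed.


Definition Dfun (x : Gs) : Gs := vsproj G (- 2^-1 *: Sop (vsval x)).

Lemma Dfun_lin : linear Dfun.
Proof.
move=> a x y; apply: subvs_inj; rewrite /Dfun linearP /= !vsprojK ?memvZ ?Sop_G //.
rewrite (linE Sop_lin); apply: (veq fr) => t; bsimp; ring.
Qed.

HB.instance Definition _ := GRing.isLinear.Build R Gs Gs *:%R Dfun Dfun_lin.

Lemma Ric_g_eq lam : (forall u, Ric br b u = lam *: u) ->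
  forall us : Gs, Ric gbr' gb us = lam *: us + Dfun us.
Proof.
move=> hE us; apply: (veq frGs) => ws.
have uG := subvsP us; have wG := subvsP ws.
rewrite (Ric_spec gbl gbs gbrl gbrr frGs).
have e : ric gbr' gb us ws =
    ric br b (vsval us) (vsval ws) + 2^-1 * P (vsval us) (vsval ws).
  by rewrite ric_rel // !vsvalK; ring.
rewrite e -(Ric_spec bl bs brl brr fr) hE /gform linearP /= /Dfun.
rewrite vsprojK ?memvZ ?Sop_G // hbD !hbZ Sop_spec //; ring.
Qed.

Lemma Dfun_der x y : Dfun (gbr' x y) = gbr' (Dfun x) y + gbr' x (Dfun y).
Proof.
apply: subvs_inj; rewrite /Dfun linearD /= !vsval_gbr !vsprojK ?memvZ ?Sop_G //.
by rewrite Sop_der ?subvsP // brZl brZr !linearZ -scalerDr.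
Qed.

Lemma soliton lam : (forall u, Ric br b u = lam *: u) ->
  ricci_soliton gbr' gb.
Proof.
move=> hE; exists lam, (linfun Dfun); split.
  by move=> u v; rewrite !lfunE; apply: Dfun_der.
by move=> u; rewrite lfunE; apply: Ric_g_eq.
Qed.

End Spec.

Lemma lor_frame (R : realType) (H : vectType R) (b : H -> H -> R) :
  lorentzian b -> exists (I : finType) (X Y : I -> H), frame b fullv X Y.
Proof.
move=> [[bl bs] [X0 [hbas [i0 horth]]]].
pose eps (i : 'I_(\dim {:H})) : R := if i == i0 then -1 else 1.
exists ('I_(\dim {:H}) : finType), (tnth X0), (fun i => eps i *: tnth X0 i).
split; [by move=> *; apply: memvf | by move=> *; apply: memvf |].
move=> y _; rewrite {1}(coord_basis hbas (memvf y)).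
apply: eq_bigr => i _; rewrite -tnth_nth; congr (_ *: _).
rewrite (bZr bl bs) {2}(coord_basis hbas (memvf y)) (bsuml bl).
rewrite (bigD1 i) //= big1 ?addr0.
  rewrite -tnth_nth (bZl bl) horth eqxx /eps; case: (i == i0); ring.
move=> j ji; rewrite -tnth_nth (bZl bl) horth.
by rewrite (negbTE ji) mulr0.
Qed.

Theorem proposition3p3 (R : realType) (H : vectType R)
  (br : H -> H -> H) (b : H -> H -> R) (Z G : {vspace H}) :
  lie_algebra br -> nilpotent br -> lorentzian b ->
  (forall z, z \in Z <-> central br z) ->
  (forall z, z \in Z -> z != 0 -> 0 < b z z) ->
  (forall x, x \in G <-> (forall z, z \in Z -> b x z = 0)) ->
  einstein br b ->
  (forall u v w : subvs_of G,
     omega Z G br (vsval (adj (gform G b) (gbr Z G br u) v)) (vsval w)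
     + omega Z G br (vsval v) (vsval (adj (gform G b) (gbr Z G br u) w)) = 0) ->
  ricci_soliton (gbr Z G br) (gform G b).
Proof.
move=> [brl brr bralt jac] _ hlor hZ hpos hG [lam hE] h8.
have [I [X [Y fr]]] := lor_frame hlor.
case: hlor => [[bl bs] _].
have cen : forall z x, z \in Z -> br z x = 0.
  by move=> z x /hZ; apply.
exact: (soliton bl bs brl brr bralt jac cen hpos hG fr h8 hE).
Qed.
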